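(* Let $G=H(T,C)$ be a generalized Halin graph such that $\kappa_{LLY}(u,v)>0$ for every edge $\{u,v\}$ of $G$, and let $x$ be a vertex of $T$ of maximum degree $D(T)$. If $T$ has exactly $D(T)$ leaves and $D(T)\ge 4$, then $d_T(x,y)\le 2$ for every vertex $y$ of $C$.
   Context: All graphs are finite, simple, undirected and connected; $d(\cdot,\cdot)$ is the shortest-path distance in $G$, $d_T(\cdot,\cdot)$ the distance in the tree $T$, and $d_v$ the degree of $v$. Lin-Lu-Yau curvature: for a vertex $v$ and $\alpha\in[0,1]$ let $m_v^\alpha(v)=\alpha$, $m_v^\alpha(u)=(1-\alpha)/d_v$ for neighbors $u$ of $v$, and $0$ elsewhere. For probability measures $m_1,m_2$, $W(m_1,m_2)=\inf_\pi\sum_{u,w}\pi(u,w)d(u,w)$ over couplings $\pi$ of $m_1,m_2$. For an edge $\{u,v\}$, $\kappa_\alpha(u,v)=1-W(m_u^\alpha,m_v^\alpha)$ and $\kappa_{LLY}(u,v)=\lim_{\alpha\to1}\kappa_\alpha(u,v)/(1-\alpha)$. A generalized Halin graph $H(T,C)$ is obtained from a tree $T$ with maximum degree $D(T)\ge3$ together with a planar embedding, by adding a cycle $C$ through all leaves of $T$ in the cyclic order in which they appear in the embedding. *)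

(* Defs.v *)
From HB Require Import structures.
From mathcomp Require Import all_boot all_order all_algebra.
From mathcomp Require Import all_classical all_reals all_analysis.
Set Implicit Arguments. Unset Strict Implicit. Unset Printing Implicit Defensive.
Import Order.TTheory GRing.Theory Num.Theory.
Import numFieldNormedType.Exports.

Section Graphs.
Variable V : finType.
Implicit Types (e t : rel V) (rho : V -> V -> V).

Definition simple_graph e := symmetric e /\ irreflexive e.

Definition deg e (v : V) : nat := #|[set y | e v y]|.

Definition maxdeg e : nat := \max_(v : V) deg e v.

Definition leaf e (v : V) : bool := deg e v == 1%N.

(** ball of radius n around x, and shortest-path distance d(x,y)
    (the graphs considered are connected, so the search up to #|V| suffices) *)
Fixpoint ball e (n : nat) (x : V) : {set V} :=
  match n with
  | 0 => [set x]
  | n'.+1 => ball e n' x :|: [set z | [exists w in ball e n' x, e w z]]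
  end.

Definition dist e (x y : V) : nat :=
  find (fun n => y \in ball e n x) (iota 0 #|V|.+1).

Definition acyclic e := forall p : seq V, (3 <= size p)%N -> ~ ucycle e p.
Definition is_tree t :=
  simple_graph t /\ (forall x y, connect t x y) /\ acyclic t.

(** A planar embedding of a tree is given by a rotation system: for every
    vertex v, [rho v] is a cyclic permutation of the neighbours of v
    (every rotation system of a tree is a planar embedding). *)
Definition rotation_system t rho :=
  forall v,
    (forall u, t v u -> t v (rho v u)) /\
    {in [pred u | t v u] &, injective (rho v)} /\
    (forall u w, t v u -> t v w -> fconnect (rho v) u w).

(** boundary (face) walk of the embedded tree on darts (a,b):
    (a,b) |-> (b, rho b a) *)
Definition face_step rho (d : V * V) : V * V := (d.2, rho d.2 d.1).

Definition leaf_nb t (l : V) : V := odflt l [pick y | t l y].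

(** the next leaf after the leaf l in the cyclic order in which the leaves
    are met along the boundary walk of the embedding *)
Definition next_leaf t rho (l : V) : V :=
  let tr := traject (face_step rho) (l, leaf_nb t l) (2 * #|V|) in
  (nth (l, l) tr (find (fun d => leaf t d.2) tr)).2.

(** Generalized Halin graph H(T,C): tree T (given by t), planar embedding
    (rotation system rho), D(T) >= 3, and the cycle C through all leaves in
    their cyclic order. *)
Definition gen_halin t rho :=
  is_tree t /\ rotation_system t rho /\ (3 <= maxdeg t)%N.

Definition halin_cycle t rho : rel V := fun x y =>
  [&& leaf t x, leaf t y & (next_leaf t rho x == y) || (next_leaf t rho y == x)].

Definition halin_adj t rho : rel V := fun x y => t x y || halin_cycle t rho x y.

End Graphs.

Section Curvature.
Local Open Scope classical_set_scope.
Local Open Scope ring_scope.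
Variables (R : realType) (V : finType).
Implicit Types (e : rel V).

Definition mass e (a : R) (v : V) : V -> R := fun z =>
  if z == v then a else if e v z then (1 - a) / (deg e v)%:R else 0.

Definition coupling (m1 m2 : V -> R) (pi : V -> V -> R) :=
  (forall x y, 0 <= pi x y) /\
  (forall x, \sum_(y : V) pi x y = m1 x) /\
  (forall y, \sum_(x : V) pi x y = m2 y).

Definition W1 e (m1 m2 : V -> R) : R :=
  inf [set c : R | exists pi, coupling m1 m2 pi /\
                   c = \sum_(x : V) \sum_(y : V) pi x y * (dist e x y)%:R].

Definition kappa_alpha e (a : R) (u v : V) : R :=
  1 - W1 e (mass e a u) (mass e a v).

Definition kappa_LLY_is e (u v : V) (k : R) :=
  (fun a : R => kappa_alpha e a u v / (1 - a)) @ at_left (1 : R) --> k.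

End Curvature.

(* Main.v *)
Require Import Defs.
From HB Require Import structures.
From mathcomp Require Import all_boot all_order all_algebra.
From mathcomp Require Import all_classical all_reals all_analysis.
From mathcomp Require Import zify ring lra.
Import Order.TTheory GRing.Theory Num.Theory.
Set Implicit Arguments. Unset Strict Implicit. Unset Printing Implicit Defensive.

Fixpoint nbw {V : eqType} (s : seq V) : bool :=
  if s is a :: s' then
    (if s' is _ :: c :: _ then a != c else true) && nbw s'
  else true.

Lemma nbw_uniq (V : finType) (t : rel V) :
  irreflexive t -> acyclic t ->
  forall s a, path t a s -> nbw (a :: s) -> uniq (a :: s).
Proof.
move=> irr acy; elim=> [|b s IH] a //= /andP[tab ps] /andP[nb1 nb2].
have us : uniq (b :: s) by exact: IH.
move: (us) => /= /andP[-> ->]; rewrite !andbT; apply/negP => ain.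
set j := index a (b :: s).
have jlt : j < size (b :: s) by rewrite index_mem.
have jb : nth a (b :: s) j = a by rewrite nth_index.
have j2 : 2 <= j.
  move: jb; rewrite /j; case: (index a (b :: s)) => [|[|j']] //=.
  - by move=> eb; move: tab; rewrite eb irr.
  - move: ain; case: s {IH us ps nb2 jlt j} nb1 => [|c s2] /=.
    + by rewrite inE => _ /eqP eab; move: tab; rewrite eab irr.
    + by move=> nac _ eca; move: nac; rewrite eca eqxx.
apply: (acy (a :: take j (b :: s))).
  by rewrite /= size_takel ?ltnS // ltnW.
apply/andP; split.
  rewrite /cycle -{2}jb -take_nth //; apply: take_path; by rewrite /= tab.
rewrite /= take_uniq // andbT in_take_leq; last exact: ltnW.
by rewrite ltnn.
Qed.

Definition tx (V : finType) (t : rel V) (x : V) : rel V :=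
  [rel u v | [&& t u v, u != x & v != x]].

Lemma path_tx_notin (V : finType) (t : rel V) x :
  forall s u, path (tx t x) u s -> x \notin s.
Proof.
elim=> [|v s IH] u //= /andP[/and3P[_ _ vx] ps].
by rewrite inE negb_or eq_sym vx (IH v).
Qed.

Lemma path_to_tx (V : finType) (t : rel V) x :
  forall s u, path t u s -> x \notin u :: s -> path (tx t x) u s.
Proof.
elim=> [|v s IH] u //= /andP[tuv ps].
rewrite !inE !negb_or => /and3P[ux vx xs].
rewrite /tx /= tuv eq_sym ux eq_sym vx /=; apply: IH => //.
by rewrite inE negb_or vx.
Qed.

Lemma branch_sep (V : finType) (t : rel V) x b b' :
  irreflexive t -> symmetric t -> acyclic t ->
  t x b -> t x b' -> connect (tx t x) b b' -> b = b'.
Proof.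
move=> irr sym acy txb txb' /connectP[p pp eb'].
move: eb'; case: (shortenP pp) => p' pp' up' _ eb'.
case: p' pp' up' eb' => [|c q] //= pp' up' eb'.
case: (eqVneq b b') => // bneq; exfalso.
apply: (acy [:: x, b, c & q]) => //.
apply/andP; split.
  rewrite /cycle /= txb /=.
  have := rcons_path t b (c :: q) x; rewrite /= => ->.
  have /= /andP[-> ->] : path t b (c :: q).
    have sb : subrel (tx t x) t by move=> u v /and3P[].
    exact: (sub_path sb (x:=b) (p:=c :: q) pp').
  by rewrite sym -eb'.
have xnot := path_tx_notin (s:=c :: q) (u:=b) pp'.
have xb : x != b by apply: contraTneq txb => ->; rewrite irr.
by rewrite /= inE negb_or xb xnot up'.
Qed.

Definition nextv (V : finType) (t : rel V) (p c : V) : V :=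
  odflt c [pick z | t c z && (z != p)].

Fixpoint walk (V : finType) (t : rel V) (n : nat) (p c : V) : seq V :=
  match n with
  | 0 => [::]
  | n'.+1 => if leaf t c then [::] else nextv t p c :: walk t n' c (nextv t p c)
  end.

Lemma nextv_spec (V : finType) (t : rel V) p c :
  symmetric t -> t p c -> ~~ leaf t c -> t c (nextv t p c) && (nextv t p c != p).
Proof.
move=> sym tpc; rewrite /nextv; case: pickP => [z -> //|none].
suff : [set y | t c y] = [set p] by rewrite /leaf /deg => ->; rewrite cards1.
apply/setP => z; rewrite !inE; have := none z; rewrite /=.
case: (eqVneq z p) => [->|_]; last by rewrite andbT => ->.
by rewrite sym tpc.
Qed.

Lemma walk_path (V : finType) (t : rel V) n :
  symmetric t -> forall p c, t p c ->
  path t p (c :: walk t n p c) && nbw (p :: c :: walk t n p c).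
Proof.
move=> sym; elim: n => [|n IH] p c tpc /=; first by rewrite tpc.
case: ifP => lc /=; first by rewrite tpc.
have /andP[h1 h2] := nextv_spec sym tpc (negbT lc).
have /andP[/= /andP[_ ->] /= /andP[-> /andP[-> ->]]] := IH _ _ h1.
by rewrite tpc h1 eq_sym h2.
Qed.

Lemma walk_end (V : finType) (t : rel V) n :
  forall p c, leaf t (last c (walk t n p c)) \/ size (walk t n p c) = n.
Proof.
elim: n => [|n IH] p c /=; first by right.
case: ifP => lc /=; first by left.
by case: (IH c (nextv t p c)) => [h|->]; [left|right].
Qed.

Definition lf (V : finType) (t : rel V) (x b : V) : V := last b (walk t #|V| x b).

Lemma branch_leaf (V : finType) (t : rel V) x b :
  irreflexive t -> symmetric t -> acyclic t -> t x b ->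
  leaf t (lf t x b) /\ connect (tx t x) b (lf t x b).
Proof.
move=> irr sym acy txb.
have /andP[pw nw] := walk_path #|V| sym txb.
have uw := nbw_uniq irr acy pw nw.
split.
  case: (walk_end t #|V| x b) => // hs; exfalso.
  move/card_uniqP: uw; rewrite /= hs => hc.
  by have := max_card (mem [:: x, b & walk t #|V| x b]); rewrite hc; lia.
apply/connectP; exists (walk t #|V| x b) => //.
apply: path_to_tx; first by move: pw => /andP[].
by move: uw => /andP[].
Qed.

Lemma ball_sub (V : finType) (e : rel V) x n m :
  (n <= m)%N -> Defs.ball e n x \subset Defs.ball e m x.
Proof.
elim: m => [|m IH]; first by rewrite leqn0 => /eqP ->.
rewrite leq_eqVlt => /orP[/eqP -> //|]; rewrite ltnS => /IH h.
apply/fintype.subsetP => y /(fintype.subsetP h) yb /=; by rewrite finset.in_setU yb.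
Qed.

Lemma path_ball (V : finType) (e : rel V) u s :
  path e u s -> last u s \in Defs.ball e (size s) u.
Proof.
elim/last_ind: s => [|s z IH]; first by rewrite /= inE.
rewrite rcons_path last_rcons size_rcons => /andP[ps ez] /=.
rewrite finset.in_setU; apply/orP; right; rewrite inE.
by apply/existsP; exists (last u s); rewrite IH.
Qed.

Lemma dist_le (V : finType) (e : rel V) u z n :
  z \in Defs.ball e n u -> (n <= #|V|)%N -> (dist e u z <= n)%N.
Proof.
move=> zb nV; rewrite /dist; set P := (fun n => z \in Defs.ball e n u).
rewrite leqNgt; apply/negP => /(before_find 0).
by rewrite nth_iota ?add0n ?ltnS // /P zb.
Qed.

Local Open Scope ring_scope.

Lemma lip_ball (R : realType) (V : finType) (e : rel V) (f : V -> R) :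
  (forall z w, e z w -> f z - f w <= 1) ->
  forall n u z, z \in Defs.ball e n u -> f u - f z <= n%:R.
Proof.
move=> lip; elim=> [|n IH] u z /=; first by rewrite inE => /eqP ->; rewrite subrr.
rewrite finset.in_setU => /orP[/IH h|]; first by rewrite (le_trans h) // ler_nat.
rewrite inE => /existsP[w /andP[wb ewz]].
have := IH _ _ wb; have := lip _ _ ewz.
rewrite -natr1; lra.
Qed.

Lemma lip_dist (R : realType) (V : finType) (e : rel V) (f : V -> R) :
  (forall z w, e z w -> f z - f w <= 1) -> (forall z w, f z - f w <= 2) ->
  forall u z, f u - f z <= (dist e u z)%:R.
Proof.
move=> lip bnd u z; rewrite /dist; set P := (fun n => z \in Defs.ball e n u).
case: (boolP (has P (iota 0 #|V|.+1))) => hP.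
  have := nth_find 0 hP; rewrite nth_iota; last by move: hP; rewrite has_find size_iota.
  by rewrite add0n => /(lip_ball lip).
move: hP; rewrite has_find -leqNgt => hs.
have -> : find P (iota 0 #|V|.+1) = #|V|.+1.
  by apply/eqP; rewrite eqn_leq -{3}(size_iota 0 #|V|.+1) hs andbT -{2}(size_iota 0 #|V|.+1) find_size.
apply: (le_trans (bnd u z)).
have : (1 <= #|V|)%N by rewrite -(cards1 u) max_card.
by rewrite -(ler_nat R) => h; rewrite -natr1; have := h; lra.
Qed.

Lemma W1_ge (R : realType) (V : finType) (e : rel V) (f : V -> R) (m1 m2 : V -> R) :
  (forall u z, f u - f z <= (dist e u z)%:R) ->
  (exists pi, coupling m1 m2 pi) ->
  \sum_z f z * m1 z - \sum_z f z * m2 z <= W1 e m1 m2.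
Proof.
move=> lip [pi0 cp0]; rewrite /W1; apply: lb_le_inf.
  by exists (\sum_(x : V) \sum_(y : V) pi0 x y * (dist e x y)%:R); exists pi0.
move=> c [pi [[p0 [r1 r2]] ->]].
have -> : \sum_z f z * m1 z - \sum_z f z * m2 z =
          \sum_x \sum_y pi x y * (f x - f y).
  under eq_bigr do rewrite -r1 mulr_sumr.
  under [X in _ - X]eq_bigr do rewrite -r2 mulr_sumr.
  rewrite [X in _ - X]exchange_big -sumrB; apply: eq_bigr => x _.
  rewrite -sumrB; apply: eq_bigr => y _; rewrite mulrBr; congr (_ - _); by rewrite mulrC.
apply: ler_sum => x _; apply: ler_sum => y _.
by apply: ler_wpM2l.
Qed.

Local Close Scope ring_scope.

Local Open Scope ring_scope.

Lemma sum_mass (R : realType) (V : finType) (e : rel V) (a : R) u (g : V -> R) :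
  e u u = false ->
  \sum_z g z * mass e a u z =
    g u * a + (1 - a) / (deg e u)%:R * \sum_(z in [set z | e u z]) g z.
Proof.
move=> irr; rewrite (bigD1 u) //= /mass eqxx; congr (_ + _).
rewrite big_mkcond [in RHS]big_mkcond mulr_sumr; apply: eq_bigr => z _ /=.
rewrite inE; case: (eqVneq z u) => [->|zu] /=; first by rewrite irr mulr0.
by case: (e u z); rewrite ?mulr0 ?mul0r // mulrC.
Qed.

Lemma mass_sum1 (R : realType) (V : finType) (e : rel V) (a : R) u :
  e u u = false -> (0 < deg e u)%N -> \sum_z mass e a u z = 1.
Proof.
move=> irr dpos.
have := sum_mass a (fun=> 1) irr; under eq_bigr do rewrite mul1r.
move=> ->; rewrite sumr_const -/(deg e u) mul1r.
rewrite -mulr_natr divfK; first by ring.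
by rewrite mul1r pnatr_eq0 -lt0n.
Qed.

Lemma mass_ge0 (R : realType) (V : finType) (e : rel V) (a : R) u z :
  0 <= a <= 1 -> 0 <= mass e a u z.
Proof.
move=> /andP[a0 a1]; rewrite /mass; case: ifP => // _; case: ifP => // _.
by apply: divr_ge0; rewrite ?subr_ge0.
Qed.

Lemma coupling_ex (R : realType) (V : finType) (e : rel V) (a : R) u v :
  e u u = false -> e v v = false -> (0 < deg e u)%N -> (0 < deg e v)%N -> 0 <= a <= 1 ->
  exists pi, coupling (mass e a u) (mass e a v) pi.
Proof.
move=> irr irr' du dv ha; exists (fun z w => mass e a u z * mass e a v w).
split; first by move=> z w; apply: mulr_ge0; apply: mass_ge0.
split=> z; first by rewrite -mulr_sumr (mass_sum1 _ irr') // mulr1.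
by rewrite -mulr_suml (mass_sum1 _ irr) // mul1r.
Qed.

Lemma lly_le0 (R : realType) (V : finType) (e : rel V) u v (k : R) :
  kappa_LLY_is e u v k ->
  (forall a : R, 0 < a < 1 -> kappa_alpha e a u v <= 0) -> k <= 0.
Proof.
move=> hk hle; rewrite leNgt; apply/negP => k0.
have h1 : \forall a \near at_left (1:R), 0 < kappa_alpha e a u v / (1 - a).
  exact: (cvgr_gt k hk 0 k0).
have h2 : \forall a \near at_left (1:R), 0 < a by apply: nbhs_left_gt; exact: ltr01.
have h3 : \forall a \near at_left (1:R), a < 1.
  exact: withinT.
have FF : ProperFilter (at_left (1:R)) by exact: at_left_proper_filter.
have [a [ha1 [ha2 ha3]]] := @filter_ex _ _ FF _ (@filterI _ _ FF _ _ h1 (@filterI _ _ FF _ _ h2 h3)).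
have := hle a; rewrite ha2 ha3 => /(_ isT) hk0.
move: ha1; rewrite ltNge => /negP; apply.
by apply: mulr_le0_ge0 => //; rewrite invr_ge0 subr_ge0 ltW.
Qed.

Definition sgn3 (R : realType) (b1 b2 : bool) : R := if b1 then 1 else if b2 then 0 else -1.

Lemma sgn3_le1 (R : realType) b1 b2 : sgn3 R b1 b2 <= 1.
Proof. by rewrite /sgn3; case: b1; case: b2; lra. Qed.

Lemma sgn3_ge (R : realType) b1 b2 : -1 <= sgn3 R b1 b2.
Proof. by rewrite /sgn3; case: b1; case: b2; lra. Qed.

Lemma sgn3_bnd (R : realType) b1 b2 c1 c2 : sgn3 R b1 b2 - sgn3 R c1 c2 <= 2.
Proof. by rewrite /sgn3; case: b1; case: b2; case: c1; case: c2; lra. Qed.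

Lemma sgn3_lip (R : realType) (b1 b2 c1 c2 : bool) :
  (b1 -> c1 || c2) -> sgn3 R b1 b2 - sgn3 R c1 c2 <= 1.
Proof. by rewrite /sgn3; case: b1 => [/(_ isT)|_]; case: c1; case: c2; case: b2 => //= *; lra. Qed.

Local Close Scope ring_scope.

Lemma nonleaf2 (V : finType) (t : rel V) z u w :
  t z u -> t z w -> u != w -> ~~ leaf t z.
Proof.
move=> tu tw uw; rewrite /leaf /deg; apply/negP => /eqP h.
have : #|[set u; w]| <= #|[set y | t z y]|.
  by apply: subset_leq_card; apply/fintype.subsetP => v; rewrite !inE => /orP[] /eqP ->.
by rewrite h cards2 uw.
Qed.

Lemma G_nl1 (V : finType) (t : rel V) rho z w :
  ~~ leaf t z -> halin_adj t rho z w = t z w.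
Proof. by move=> /negbTE nl; rewrite /halin_adj /halin_cycle nl orbF. Qed.

Lemma G_nl2 (V : finType) (t : rel V) rho z w :
  ~~ leaf t w -> halin_adj t rho z w = t z w.
Proof. by move=> /negbTE nl; rewrite /halin_adj /halin_cycle nl andbF orbF. Qed.

Lemma G_sym (V : finType) (t : rel V) rho :
  symmetric t -> symmetric (halin_adj t rho).
Proof.
move=> sym z w; rewrite /halin_adj /halin_cycle sym; congr (_ || _).
by rewrite andbCA orbC.
Qed.

Lemma tx_sym (V : finType) (t : rel V) x : symmetric t -> symmetric (tx t x).
Proof. by move=> sym z w; rewrite /tx /= [t z w]sym [X in _ && X]andbC. Qed.


Lemma deg2 (V : finType) (t : rel V) z u : t z u -> ~~ leaf t z -> (2 <= deg t z)%N.
Proof.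
move=> tzu nl; have : (0 < deg t z)%N.
  by rewrite /deg card_gt0; apply/set0Pn; exists u; rewrite inE.
by move: nl; rewrite /leaf; lia.
Qed.

Local Open Scope ring_scope.

Lemma curv_contra (R : realType) (V : finType) (t : rel V) rho x a1 D :
  symmetric t -> irreflexive t ->
  t x a1 -> ~~ leaf t a1 -> ~~ leaf t x -> deg t x = D -> (3 < D)%N ->
  (forall c, t a1 c -> c != x -> ~~ leaf t c) ->
  (forall b, t x b -> b != a1 -> ~~ t a1 b) ->
  (forall b w, t x b -> b != a1 -> t a1 w -> w != x -> ~~ t b w) ->
  forall k : R, kappa_LLY_is (halin_adj t rho) a1 x k -> k <= 0.
Proof.
move=> sym irr xa1 nla1 nlx degx D4 NL sep1 sep2 k hk.
apply: (lly_le0 hk) => a /andP[a0 a1'].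
set G := halin_adj t rho.
have Gs : symmetric G := G_sym rho sym.
set A := fun z => (z == a1) || (t a1 z && (z != x)).
set f : V -> R := fun z => sgn3 R (A z) [exists w, A w && G z w].
have lip : forall z w, G z w -> f z - f w <= 1.
  move=> z w gzw; apply: sgn3_lip => Az; apply/orP; right.
  by apply/existsP; exists z; rewrite Az Gs.
have bnd : forall z w, f z - f w <= 2 by move=> z w; apply: sgn3_bnd.
have ldist := lip_dist lip bnd.
have ta1x : t a1 x by rewrite sym.
have Na1 : [set z | G a1 z] = [set z | t a1 z] by apply/setP => z; rewrite !inE /G G_nl1.
have Nx : [set z | G x z] = [set z | t x z] by apply/setP => z; rewrite !inE /G G_nl1.
have dG1 : deg G a1 = deg t a1 by rewrite /deg Na1.
have dGx : deg G x = D by rewrite /deg Nx.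
have k2 := deg2 ta1x nla1.
have Ga1 : G a1 a1 = false by rewrite /G G_nl1 // irr.
have Gx : G x x = false by rewrite /G G_nl1 // irr.
have fa1 : f a1 = 1 by rewrite /f /sgn3 /A eqxx.
have Ax : A x = false.
  rewrite /A eqxx andbF orbF; apply/negbTE; apply: contraTneq xa1 => ->; by rewrite irr.
have fx : f x = 0.
  rewrite /f /sgn3 Ax; have -> // : [exists w, A w && G x w].
  by apply/existsP; exists a1; rewrite /A eqxx /G G_nl1 // xa1.
have fb : forall b, t x b -> b != a1 -> f b = -1.
  move=> b xb ba1; rewrite /f /sgn3.
  have -> : A b = false by rewrite /A (negbTE ba1) (negbTE (sep1 b xb ba1)).
  case: existsP => // [[w /andP[/orP[/eqP ->|/andP[a1w wx]] Gbw]]].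
    by move: Gbw; rewrite /G G_nl2 // sym (negbTE (sep1 b xb ba1)).
  by move: Gbw; rewrite /G G_nl2 ?NL // (negbTE (sep2 b w xb ba1 a1w wx)).
have fc : forall c, t a1 c -> c != x -> f c = 1 by move=> c a1c cx; rewrite /f /sgn3 /A a1c cx orbT.
have S1 : \sum_(z in [set z | G a1 z]) f z = (deg t a1)%:R - 1.
  rewrite Na1 (bigD1 x) /=; last by rewrite inE.
  rewrite fx add0r (eq_bigr (fun=> 1)); last by move=> z /andP[]; rewrite inE => a1z zx; apply: fc.
  rewrite sumr_const.
  have -> : #|(fun i : V => (i \in [set z | t a1 z]) && (i != x))| = (deg t a1).-1.
    rewrite /deg (cardD1 x [set z | t a1 z]) inE ta1x add1n /=.
    by apply: eq_card => i; rewrite [in LHS]unfold_in /= !inE andbC.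
  have dp : (0 < deg t a1)%N by apply: leq_trans k2.
  by rewrite -[in RHS](prednK dp) -natr1 addrK.
have D0 : (0 < D)%N by apply: leq_trans D4.
have S2 : \sum_(z in [set z | G x z]) f z = 1 - (D%:R - 1).
  rewrite Nx (bigD1 a1) /=; last by rewrite inE.
  rewrite fa1 (eq_bigr (fun=> -1)); last by move=> z /andP[]; rewrite inE => xz za1; apply: fb.
  rewrite sumr_const.
  have -> : #|(fun i : V => (i \in [set z | t x z]) && (i != a1))| = D.-1.
    rewrite -degx /deg (cardD1 a1 [set z | t x z]) inE xa1 add1n /=.
    by apply: eq_card => i; rewrite [in LHS]unfold_in /= !inE andbC.
  by rewrite mulNrn -[in RHS](prednK D0) -natr1 addrK.
have dpos1 : (0 < deg G a1)%N by rewrite dG1; apply: leq_trans k2.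
have dpos2 : (0 < deg G x)%N by rewrite dGx.
have ha : 0 <= a <= 1 by rewrite !ltW.
rewrite /kappa_alpha subr_le0.
apply: le_trans _ (W1_ge ldist (coupling_ex Ga1 Gx dpos1 dpos2 ha)).
rewrite !sum_mass // fa1 fx S1 S2 dG1 dGx.
have hd : (2:R) <= (deg t a1)%:R by rewrite ler_nat.
have hD : (4:R) <= D%:R by rewrite ler_nat.
have dr0 : (deg t a1)%:R != 0 :> R by rewrite pnatr_eq0 -lt0n (leq_trans _ k2).
have Dr0 : D%:R != 0 :> R by rewrite pnatr_eq0 -lt0n.
have u0 : 0 <= ((deg t a1)%:R : R)^-1 by rewrite invr_ge0 ler0n.
have w0 : 0 <= (D%:R : R)^-1 by rewrite invr_ge0 ler0n.
have hu : (deg t a1)%:R * ((deg t a1)%:R : R)^-1 = 1 by rewrite mulfV.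
have hw : D%:R * (D%:R : R)^-1 = 1 by rewrite mulfV.
move: hd hD dr0 Dr0 u0 w0 hu hw; set dr := ((deg t a1)%:R : R); set Dr := (D%:R : R).
move=> hd hD dr0 Dr0 u0 w0 hu hw.
rewrite ?mulr1 ?mul1r ?mul0r.
have e1 : (1 - a) / dr * (dr - 1) = (1 - a) * (1 - dr^-1) by field.
have e2 : (1 - a) / Dr * (1 - (Dr - 1)) = (1 - a) * (2 * Dr^-1 - 1) by field.
rewrite e1 e2.
clear -hd hD u0 w0 hu hw a0 a1'.
have hu2 : dr^-1 <= 1/2 by nra.
have hw2 : Dr^-1 <= 1/4 by nra.
have h1 : 0 <= (1 - a) * (1/2 - dr^-1) by apply: mulr_ge0; lra.
have h2 : 0 <= (1 - a) * (1/4 - Dr^-1) by apply: mulr_ge0; lra.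
nra.
Qed.

Local Close Scope ring_scope.

Unset Implicit Arguments. Set Strict Implicit.
Theorem corollary3p3 (R : realType) (V : finType) (t : rel V)
    (rho : V -> V -> V) (x : V) :
  gen_halin t rho ->
  (forall u v, halin_adj t rho u v ->
     exists k : R, (0 < k)%R /\ kappa_LLY_is (halin_adj t rho) u v k) ->
  deg t x = maxdeg t ->
  #|[set y | leaf t y]| = maxdeg t ->
  (4 <= maxdeg t)%N ->
  forall y : V, leaf t y -> (dist t x y <= 2)%N.
Proof.
move=> [[[sym irr] [conn acy]] [_ _]] Hk degx nleaves D4 y ly.
move: degx nleaves D4; set D := maxdeg t => degx nleaves D4.
have cardV : (D <= #|V|)%N by rewrite -degx /deg max_card.
have /connectP [p0 pp0 ey] := conn x y.
move: ey; case: (shortenP pp0) => p pp up _ ey.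
case: (leqP (size p) 2) => [sp|sp].
  apply: dist_le; last by lia.
  by rewrite ey; exact: (fintype.subsetP (ball_sub t x sp) _ (path_ball pp)).
exfalso.
case: p pp up ey sp => [|a1 [|a2 [|a3 q]]] //= pp up ey _.
move: (pp) (up) => /and4P[xa1 a1a2 a2a3 pq] /and5P[xn a1n a2n a3n uq].
have xa2 : x != a2 by move: xn; rewrite !inE !negb_or => /and3P[_ -> _].
have a1x : a1 != x by apply: contraTneq xa1 => ->; rewrite irr.
have ta1x : t a1 x by rewrite sym.
have nla1 : ~~ leaf t a1 by apply: (nonleaf2 ta1x a1a2 xa2).
have nlx : ~~ leaf t x by rewrite /leaf degx; apply/eqP => h; rewrite h in D4.
have pa1 : path t a1 [:: a2, a3 & q] by rewrite /= a1a2 a2a3 pq.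
have ca1y : connect (tx t x) a1 y.
  apply/connectP; exists [:: a2, a3 & q]; last by rewrite ey.
  by apply: path_to_tx => //; rewrite inE negb_or eq_sym a1x.
have bsep := fun b b' => @branch_sep V t x b b' irr sym acy.
have ctx_sym : connect_sym (tx t x) by apply: sym_connect_sym; apply: tx_sym.
have NL : forall c, t a1 c -> c != x -> ~~ leaf t c.
  move=> c a1c cx; apply/negP => lc.
  have ca1c : connect (tx t x) a1 c by apply: connect1; rewrite /tx /= a1c a1x cx.
  have yc : y != c.
    apply/eqP => eyc; apply: (acy [:: a1, a2, a3 & q]) => //.
    apply/andP; split; last by rewrite /= a1n a2n a3n uq.
    rewrite /cycle -cats1 cat_path pa1 /= andbT.
    by rewrite -ey eyc sym.
  set B := [set z | t x z] :\ a1.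
  have inB : forall b, b \in B -> t x b /\ b != a1 by move=> b; rewrite !inE => /andP[-> ->].
  have lfB : forall b, b \in B -> leaf t (lf t x b) /\ connect (tx t x) b (lf t x b).
    by move=> b /inB [txb _]; apply: branch_leaf.
  have notA : forall b z, b \in B -> connect (tx t x) a1 z -> lf t x b != z.
    move=> b z bB ca1z; apply/eqP => ez.
    have [txb ba1] := inB _ bB; have [_ cb] := lfB _ bB.
    have cba1 : connect (tx t x) b a1 by apply: (connect_trans cb); rewrite ez ctx_sym.
    by move: ba1; rewrite (bsep b a1 txb xa1 cba1) eqxx.
  set S := y |: (c |: (lf t x @: B)).
  have cS : #|S| = D.+1.
    rewrite /S !cardsU1 card_in_imset.
      have cB : #|B| = D.-1 by move: degx; rewrite /deg (cardsD1 a1) inE xa1 => <-.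
      rewrite cB in_setU1 negb_or yc /=.
      have -> : c \notin lf t x @: B.
        by apply/imsetP => [[b bB ecb]]; move: (notA b c bB ca1c); rewrite ecb eqxx.
      have -> : y \notin lf t x @: B.
        by apply/imsetP => [[b bB ecb]]; move: (notA b y bB ca1y); rewrite ecb eqxx.
      by rewrite !add1n prednK // (leq_trans _ D4).
    move=> b b' bB b'B el.
    have [txb _] := inB _ bB; have [txb' _] := inB _ b'B.
    have [_ cb] := lfB _ bB; have [_ cb'] := lfB _ b'B.
    apply: bsep txb txb' _; apply: (connect_trans cb); rewrite el ctx_sym; exact: cb'.
  have : (#|S| <= #|[set l | leaf t l]|)%N.
    apply: subset_leq_card; apply/fintype.subsetP => z.
    rewrite !inE => /orP[/eqP -> //|/orP[/eqP -> //|/imsetP[b bB ->]]].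
    by have [] := lfB _ bB.
  by rewrite cS nleaves ltnn.
have bx : forall b, t x b -> b != x by move=> b xb; apply: contraTneq xb => ->; rewrite irr.
have sep1 : forall b, t x b -> b != a1 -> ~~ t a1 b.
  move=> b xb ba1; apply/negP => a1b.
  have c1 : connect (tx t x) a1 b by apply: connect1; rewrite /tx /= a1b a1x bx.
  by move: ba1; rewrite (bsep a1 b xa1 xb c1) eqxx.
have sep2 : forall b w, t x b -> b != a1 -> t a1 w -> w != x -> ~~ t b w.
  move=> b w xb ba1 a1w wx; apply/negP => bw.
  have c1 : connect (tx t x) a1 b.
    apply: (connect_trans (y := w)); apply: connect1; rewrite /tx /= ?a1w ?a1x ?wx ?bx //.
    by rewrite sym bw.
  by move: ba1; rewrite (bsep a1 b xa1 xb c1) eqxx.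
have Ga1x : halin_adj t rho a1 x by rewrite /halin_adj ta1x.
have [k [k0 hk]] := Hk a1 x Ga1x.
have := curv_contra sym irr xa1 nla1 nlx degx D4 NL sep1 sep2 hk.
by rewrite leNgt k0.
Qed.
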